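(* Let $m,n\ge1$ and let $F\subseteq\{1,\dots,m\}\times\{1,\dots,n\}$ be a binary image with row sums $(r_1,\dots,r_m)$ and column sums $(c_1,\dots,c_n)$ (no assumption on $r_1$ or $r_m$). Let $L_h(F)$ be the length of the horizontal boundary of $F$. Define $b_i=\#\{j:c_j\ge i\}$ and $d_i=b_i-r_i$ for $i=1,\dots,m$, and set $d_0=d_{m+1}=0$. Let $k$ be an integer with $1\le k\le m$ such that $d_k<0$ and $d_{k+1}\ge0$, and let $\sigma=\sum_{i=1}^k d_i$. Then for all integers $t,s\ge0$, every set of indices $\{i_1<\dots<i_{2t+1}\}\subseteq\{0,1,\dots,k,m+1\}$ and every set of indices $\{\tilde i_1<\dots<\tilde i_{2s+1}\}\subseteq\{0,k+1,k+2,\dots,m+1\}$, \[ L_h(F)\ \ge\ 2r_1+\big(d_{i_1}-d_{i_2}+d_{i_3}-\cdots-d_{i_{2t}}+2d_{i_{2t+1}}\big)+\big(d_{\tilde i_1}-d_{\tilde i_2}+d_{\tilde i_3}-\cdots-d_{\tilde i_{2s}}+2d_{\tilde i_{2s+1}}\big)-\sigma. \]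
   Context: A binary image is a finite set $F\subseteq\mathbb Z^2$; point $(i,j)$ lies in row $i$ and column $j$. The row sum $r_i$ is the number of points of $F$ in row $i$, and the column sum $c_j$ is the number of points of $F$ in column $j$. The horizontal boundary of $F$ is the set of ordered pairs of points $((i,j),(i',j))$ of $\mathbb Z^2$ with $|i-i'|=1$, $(i,j)\in F$ and $(i',j)\notin F$; its length is the number of such pairs. *)

(* Defs.v *)
From mathcomp Require Import all_boot all_order all_algebra.
Set Implicit Arguments. Unset Strict Implicit. Unset Printing Implicit Defensive.
Import Order.TTheory GRing.Theory Num.Theory.

(* A binary image is given by its membership predicate F : nat -> nat -> bool;
   F i j means the point (i,j) (row i, column j) belongs to the image. *)

Definition in_grid (m n : nat) (F : nat -> nat -> bool) : Prop :=
  forall i j, F i j -> (1 <= i <= m) && (1 <= j <= n).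

Definition rowsum (n : nat) (F : nat -> nat -> bool) (i : nat) : nat :=
  \sum_(1 <= j < n.+1) (F i j : nat).

Definition colsum (m : nat) (F : nat -> nat -> bool) (j : nat) : nat :=
  \sum_(1 <= i < m.+1) (F i j : nat).

Definition bseq (m n : nat) (F : nat -> nat -> bool) (i : nat) : nat :=
  \sum_(1 <= j < n.+1) ((i <= colsum m F j) : nat).

Definition dseq (m n : nat) (F : nat -> nat -> bool) (i : nat) : int :=
  if (1 <= i <= m) then ((bseq m n F i)%:Z - (rowsum n F i)%:Z)%R else 0%R.

(* Length of the horizontal boundary: number of pairs ((i,j),(i',j)) with
   |i - i'| = 1, (i,j) in F, (i',j) not in F.  Since F lies in the grid,
   it suffices to sum over (i,j) in the grid, counting the two neighbours
   (i-1,j) and (i+1,j) (i >= 1 so i.-1 is the true predecessor). *)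
Definition hboundary (m n : nat) (F : nat -> nat -> bool) : nat :=
  \sum_(1 <= i < m.+1) \sum_(1 <= j < n.+1)
     (F i j * ((~~ F i.-1 j : nat) + (~~ F i.+1 j : nat))).

Definition altsum (d : nat -> int) (s : seq nat) : int :=
  (\sum_(l < (size s).-1) (-1) ^+ l * d (nth 0 s l) + 2%:R * d (last 0 s))%R.

(* Main.v *)
Require Import Defs.
From Stdlib Require Import Lia.
From mathcomp Require Import all_boot all_order all_algebra.
Set Implicit Arguments. Unset Strict Implicit. Unset Printing Implicit Defensive.
Import Order.TTheory GRing.Theory Num.Theory.
Local Open Scope ring_scope.

Definition pp (z : int) : int := if (0 <= z) then z else 0.
Definition e_of (x y : bool) : int := (y : nat)%:Z - (x : nat)%:Z.
Definition g_of (x y : bool) (kf : nat) : int := if kf != 2%N then e_of x y else 0.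
Definition h_of (x y : bool) (kf : nat) : int := if kf == 2%N then e_of x y else 0.
Definition stA (x y : bool) (kf qf qqf : nat) (x2 y2 : bool) (kf2 : nat) : int :=
  (if qf == 0%N then pp (g_of x2 y2 kf2 - g_of x y kf) else 0)
  + (if qqf == 0%N then pp (h_of x2 y2 kf2 - h_of x y kf) else 0)
  - ((x2 != x) : nat)%:Z.
Definition ptA (x y : bool) (kf qf qqf : nat) : int :=
  (if qf == 1%N then g_of x y kf - (if kf == 1%N then g_of x y kf else 0) else 0)
  + (if qqf == 1%N then h_of x y kf else 0)
  - (if kf != 2%N then e_of x y else 0).
Definition next3 (a b : nat) : bool :=
  ((a == 0%N) && (b <= 1)%N) || ((a == 1%N) && (b == 2%N)) || ((a == 2%N) && (b == 2%N)).
Definition ftabl : seq int := [:: Posz 0; Posz 1; Posz 1; Posz 0; Posz 1; Posz 1; Posz 0; Posz 1; Posz 1; Posz 0; Posz 1; Posz 1; Posz 0; Posz 1; Posz 1; Posz 0; Posz 1; Posz 1; Posz 0; Posz 2; Posz 2; Posz 0; Posz 2; Posz 2; Posz 0; Posz 2; Posz 2; Posz 0; Posz 1; Posz 1; Posz 0; Posz 1; Posz 1; Posz 0; Posz 1; Posz 1; Posz 0; Posz 1; Posz 1; Posz 0; Posz 1; Posz 1; Posz 0; Posz 1; Posz 1; Posz 0; Posz 2; Posz 2; Posz 0; Posz 2; Posz 2; Posz 0; Posz 2; Posz 2; Posz 0; Posz 1; Posz 1; Posz 0; Posz 1; Posz 1; Posz 0; Posz 2; Posz 2; Posz 0; Posz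 1; Posz 1; Posz 0; Posz 1; Posz 1; Posz 0; Posz 2; Posz 2; Posz 0; Posz 1; Posz 1; Posz 0; Posz 1; Posz 1; Posz 0; Posz 2; Posz 2; Negz 49; Posz 1; Posz 1; Negz 49; Posz 1; Posz 1; Negz 49; Posz 1; Posz 1; Negz 49; Posz 2; Posz 2; Negz 49; Posz 2; Posz 2; Negz 49; Posz 2; Posz 2; Negz 49; Posz 0; Posz 2; Negz 49; Posz 0; Posz 2; Negz 49; Posz 0; Posz 2; Negz 49; Posz 1; Posz 1; Negz 49; Posz 1; Posz 1; Negz 49; Posz 1; Posz 1; Negz 49; Posz 1; Posz 1; Negz 49; Posz 1; Posz 1; Negz 49; Posz 1; Posz 1; Negz 49; Posz 0; Posz 2; Negz 49; Posz 0; Posz 2; Negz 49; Posz 0; Posz 2; Negz 49; Posz 1; Posz 1; Negz 49; Posz 2; Posz 2; Negz 49; Posz 0; Posz 2; Negz 49; Posz 1; Posz 1; Negz 49; Posz 2; Posz 2; Negz 49; Posz 0; Posz 2; Negz 49; Posz 1; Posz 1; Negz 49; Posz 2; Posz 2; Negz 49; Posz 0; Posz 2; Posz 0; Posz 0; Posz 0; Posz 0; Posz 0; Posz 0; Posz 0; Posz 0; Posz 0; Negz 0; Negz 0; Negz 0; Negz 0; Negz 0; Negz 0; Negz 0; Negz 0; Negz 0; Posz 1; Posz 1; Posz 1; Posz 1; Posz 1; Posz 1; Posz 1; Posz 1; Posz 1; Posz 0; Posz 0; Posz 0; Posz 0; Posz 0; Posz 0; Posz 0; Posz 0; Posz 0;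 Posz 0; Posz 0; Posz 0; Posz 0; Posz 0; Posz 0; Posz 0; Posz 0; Posz 0; Posz 1; Posz 1; Posz 1; Posz 1; Posz 1; Posz 1; Posz 1; Posz 1; Posz 1; Posz 0; Posz 0; Posz 0; Negz 0; Negz 0; Negz 0; Posz 1; Posz 1; Posz 1; Posz 0; Posz 0; Posz 0; Negz 0; Negz 0; Negz 0; Posz 1; Posz 1; Posz 1; Posz 0; Posz 0; Posz 0; Negz 0; Negz 0; Negz 0; Posz 1; Posz 1; Posz 1; Posz 1; Posz 0; Posz 0; Posz 1; Posz 0; Posz 0; Posz 1; Posz 0; Posz 0; Posz 1; Posz 0; Posz 0; Posz 1; Posz 0; Posz 0; Posz 1; Posz 0; Posz 0; Posz 1; Posz 1; Posz 1; Posz 1; Posz 1; Posz 1; Posz 1; Posz 1; Posz 1; Posz 1; Posz 0; Posz 0; Posz 1; Posz 0; Posz 0; Posz 1; Posz 0; Posz 0; Posz 1; Posz 0; Posz 0; Posz 1; Posz 0; Posz 0; Posz 1; Posz 0; Posz 0; Posz 1; Posz 1; Posz 1; Posz 1; Posz 1; Posz 1; Posz 1; Posz 1; Posz 1; Posz 1; Posz 0; Posz 0; Posz 1; Posz 0; Posz 0; Posz 1; Posz 1; Posz 1; Posz 1; Posz 0; Posz 0; Posz 1; Posz 0; Posz 0; Posz 1; Posz 1; Posz 1; Posz 1; Posz 0; Posz 0; Posz 1; Posz 0; Posz 0; Posz 1; Posz 1; Posz 1].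
Definition LOW : int := Negz 49.
Definition ftab (x y : bool) (kf qf qqf mm : nat) : int :=
  nth LOW ftabl ((((((x : nat) * 2 + y) * 3 + kf) * 3 + qf) * 3 + qqf) * 3 + mm)%N.
Definition adjA (x2 y2 : bool) (kf kf2 m1 : nat) : int :=
  if kf != 2%N then (if kf2 != 2%N then e_of x2 y2 else - (m1%:Z)) else 0.
Definition chk (x y : bool) (kf qf qqf : nat) (x2 y2 : bool) (kf2 qf2 qqf2 d : nat) : bool :=
  let m1 := minn d 2 in let d2 := (d + y2 - x2)%N in let m2 := minn d2 2 in
  let v := ftab x y kf qf qqf m1 in let v2 := ftab x2 y2 kf2 qf2 qqf2 m2 in
  (v == LOW) || ((v2 != LOW) &&
     (v + stA x y kf qf qqf x2 y2 kf2 + ptA x2 y2 kf2 qf2 qqf2 + adjA x2 y2 kf kf2 m1 <= v2)).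
Definition bools := [:: false; true].
Definition all_ok : bool :=
  all (fun x : bool => all (fun y : bool => all (fun kf : nat => all (fun qf : nat => all (fun qqf : nat =>
  all (fun x2 : bool => all (fun y2 : bool => all (fun kf2 : nat => all (fun qf2 : nat => all (fun qqf2 : nat =>
  all (fun d : nat =>
    (next3 kf kf2 && next3 qf qf2 && next3 qqf qqf2 && (y2 ==> y) && (x2 <= d + y2)%N) ==>
     chk x y kf qf qqf x2 y2 kf2 qf2 qqf2 d) (iota 0 4))
  (iota 0 3)) (iota 0 3)) (iota 0 3)) bools) bools) (iota 0 3)) (iota 0 3)) (iota 0 3)) bools) bools.
Lemma all_ok_true : all_ok. Proof. by vm_compute. Qed.

Definition base_ok : bool :=
  all (fun x1 : bool => all (fun y1 : bool => all (fun kf1 : nat => all (fun qf0 : nat => all (fun qqf0 : nat =>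
  all (fun qf1 : nat => all (fun qqf1 : nat =>
   (next3 0 kf1 && next3 qf0 qf1 && next3 qqf0 qqf1 && (x1 <= y1)%N) ==>
   (let v := ftab x1 y1 kf1 qf1 qqf1 (minn (y1 - x1) 2) in
    (v != LOW) &&
    ((2 * (x1 : nat))%:Z + ptA false false 0 qf0 qqf0 + stA false false 0 qf0 qqf0 x1 y1 kf1
       + ptA x1 y1 kf1 qf1 qqf1 + e_of x1 y1 <= v)))
  (iota 0 3)) (iota 0 3)) (iota 0 3)) (iota 0 3)) (iota 0 3)) bools) bools.
Lemma base_ok_true : base_ok. Proof. by vm_compute. Qed.
Lemma final_ok : ftab false false 2 2 2 0 <= 0. Proof. by vm_compute. Qed.

Definition cmp (n a : nat) : nat := if (n < a)%N then 0%N else if n == a then 1%N else 2%N.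
Lemma cmp_lt3 n a : (cmp n a < 3)%N.
Proof. by rewrite /cmp; case: ifP => //; case: ifP. Qed.
Ltac nat_norm := repeat match goal with
 | H : is_true (_ <= _)%N |- _ => move/ssrnat.leP: H => H
 | H : is_true (_ == _)%N |- _ => move/eqP: H => H
 end.
Ltac nlia := try (apply/ssrnat.leP); nat_norm;
  repeat match goal with
  | H : (_ <= _)%coq_nat |- _ => revert H
  | H : @eq nat _ _ |- _ => revert H end;
  rewrite -?plusE -?minusE -?multE; intros; lia.
Lemma next3_cmp n a : next3 (cmp n a) (cmp n.+1 a).
Proof.
rewrite /cmp /next3; case: (ltngtP n a) => h; case: (ltngtP n.+1 a) => h2 //=.
all: exfalso; nlia.
Qed.
Lemma cmp_ne2 n a : (cmp n a != 2%N) = (n <= a)%N.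
Proof. by rewrite /cmp; case: ltngtP. Qed.
Lemma cmp_eq2 n a : (cmp n a == 2%N) = (a < n)%N.
Proof. by rewrite /cmp; case: ltngtP. Qed.
Lemma cmp_eq1 n a : (cmp n a == 1%N) = (n == a).
Proof. by rewrite /cmp; case: ltngtP. Qed.
Lemma cmp_eq0 n a : (cmp n a == 0%N) = (n < a)%N.
Proof. by rewrite /cmp; case: ltngtP. Qed.

Lemma mem_bools (b : bool) : b \in bools. Proof. by case: b. Qed.
Lemma mem_iota3 i k : (i < k)%N -> i \in iota 0 k.
Proof. by move=> h; rewrite mem_iota. Qed.

Lemma chkP (x y : bool) (kf qf qqf : nat) (x2 y2 : bool) (kf2 qf2 qqf2 d : nat) :
  (kf < 3)%N -> (qf < 3)%N -> (qqf < 3)%N -> (kf2 < 3)%N -> (qf2 < 3)%N -> (qqf2 < 3)%N ->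
  (d < 4)%N ->
  next3 kf kf2 -> next3 qf qf2 -> next3 qqf qqf2 -> (y2 ==> y) -> (x2 <= d + y2)%N ->
  chk x y kf qf qqf x2 y2 kf2 qf2 qqf2 d.
Proof.
move=> h1 h2 h3 h4 h5 h6 h7 n1 n2 n3 yy xd.
have := all_ok_true; rewrite /all_ok.
move=> /allP/(_ x (mem_bools x))/allP/(_ y (mem_bools y))/allP/(_ kf (mem_iota3 h1)).
move=> /allP/(_ qf (mem_iota3 h2))/allP/(_ qqf (mem_iota3 h3)).
move=> /allP/(_ x2 (mem_bools x2))/allP/(_ y2 (mem_bools y2))/allP/(_ kf2 (mem_iota3 h4)).
move=> /allP/(_ qf2 (mem_iota3 h5))/allP/(_ qqf2 (mem_iota3 h6))/allP/(_ d (mem_iota3 h7)).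
by rewrite n1 n2 n3 yy xd.
Qed.

Lemma baseP (x1 y1 : bool) (kf1 qf0 qqf0 qf1 qqf1 : nat) :
  (kf1 < 3)%N -> (qf0 < 3)%N -> (qqf0 < 3)%N -> (qf1 < 3)%N -> (qqf1 < 3)%N ->
  next3 0 kf1 -> next3 qf0 qf1 -> next3 qqf0 qqf1 -> (x1 <= y1)%N ->
  let v := ftab x1 y1 kf1 qf1 qqf1 (minn (y1 - x1) 2) in
  (v != LOW) &&
  ((2 * (x1 : nat))%:Z + ptA false false 0 qf0 qqf0 + stA false false 0 qf0 qqf0 x1 y1 kf1
       + ptA x1 y1 kf1 qf1 qqf1 + e_of x1 y1 <= v).
Proof.
move=> h1 h2 h3 h4 h5 n1 n2 n3 xy.
have := base_ok_true; rewrite /base_ok.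
move=> /allP/(_ x1 (mem_bools x1))/allP/(_ y1 (mem_bools y1))/allP/(_ kf1 (mem_iota3 h1)).
move=> /allP/(_ qf0 (mem_iota3 h2))/allP/(_ qqf0 (mem_iota3 h3)).
move=> /allP/(_ qf1 (mem_iota3 h4))/allP/(_ qqf1 (mem_iota3 h5)).
by rewrite n1 n2 n3 xy.
Qed.

Definition yv (c n : nat) : bool := (1 <= n <= c)%N.
Definition stR (x : nat -> bool) (c k q q' p : nat) : int :=
  stA (x p) (yv c p) (cmp p k) (cmp p q) (cmp p q') (x p.+1) (yv c p.+1) (cmp p.+1 k).
Definition ptR (x : nat -> bool) (c k q q' p : nat) : int :=
  ptA (x p) (yv c p) (cmp p k) (cmp p q) (cmp p q').
Definition Rr (x : nat -> bool) (c k q q' n : nat) : int :=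
  (2 * (x 1%N : nat))%:Z + \sum_(0 <= p < n.+1) ptR x c k q q' p
  + \sum_(0 <= p < n) stR x c k q q' p.
Definition Sx (x : nat -> bool) (n : nat) : nat := (\sum_(1 <= i < n.+1) (x i : nat))%N.
Definition Sy (c n : nat) : nat := (\sum_(1 <= i < n.+1) (yv c i : nat))%N.
Definition dn (x : nat -> bool) (c n : nat) : nat := (Sy c n - Sx x n)%N.

Lemma Sx0 x : Sx x 0 = 0%N. Proof. by rewrite /Sx big_geq. Qed.
Lemma SxS x n : Sx x n.+1 = (Sx x n + x n.+1)%N.
Proof. by rewrite /Sx big_nat_recr. Qed.
Lemma Sy0 c : Sy c 0 = 0%N. Proof. by rewrite /Sy big_geq. Qed.
Lemma SyS c n : Sy c n.+1 = (Sy c n + yv c n.+1)%N.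
Proof. by rewrite /Sy big_nat_recr. Qed.

Lemma Sy_min c n : Sy c n = minn n c.
Proof.
elim: n => [|n IH]; first by rewrite Sy0 min0n.
rewrite SyS IH /yv /=.
case: (leqP n.+1 c) => h.
  by rewrite (minn_idPl (ltnW h)) addn1.
by rewrite addn0; apply/minn_idPr; rewrite -ltnS.
Qed.

Lemma Sx_le_n x n : (Sx x n <= n)%N.
Proof.
elim: n => [|n IH]; first by rewrite Sx0.
rewrite SxS; apply: (@leq_trans (n + 1)); last by rewrite addn1.
by apply: leq_add => //; case: (x n.+1).
Qed.

Lemma Sx_stable x m : (forall i, (m < i)%N -> x i = false) ->
  forall n, (m <= n)%N -> Sx x n = Sx x m.
Proof.
move=> xm; elim => [|n IH] h.
  by move: h; rewrite leqn0 => /eqP ->.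
move: h; rewrite leq_eqVlt => /orP [/eqP -> //|h].
by rewrite SxS IH // xm // addn0.
Qed.

Lemma Sx_mono x n n' : (n <= n')%N -> (Sx x n <= Sx x n')%N.
Proof.
move=> h; elim: n' h => [|n' IH]; first by rewrite leqn0 => /eqP ->.
rewrite leq_eqVlt => /orP [/eqP -> //|h].
by rewrite SxS (leq_trans (IH h)) // leq_addr.
Qed.

Lemma Sx_le_Sy x m n : (forall i, (m < i)%N -> x i = false) ->
  (Sx x n <= Sy (Sx x m) n)%N.
Proof.
move=> xm; rewrite Sy_min leq_min Sx_le_n /=.
case: (leqP n m) => h; first exact: Sx_mono.
by rewrite (Sx_stable xm (ltnW h)).
Qed.

Lemma dn_rec x m n : (forall i, (m < i)%N -> x i = false) ->
  (dn x (Sx x m) n.+1 + x n.+1 = dn x (Sx x m) n + yv (Sx x m) n.+1)%N.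
Proof.
move=> xm; rewrite /dn SxS SyS.
have h1 := Sx_le_Sy n xm; have h2 := Sx_le_Sy n.+1 xm.
move: h2; rewrite SxS SyS => h2.
move: h1 h2; set a := Sx x n; set b := Sy _ n; set u := (x n.+1 : nat); set w := (yv _ _ : nat).
move=> h1 h2; clearbody a b u w; nlia.
Qed.

Lemma minn_aux (d : nat) (y x : bool) : (x <= d + y)%N ->
  [/\ minn (minn d 3 + y - x) 2 = minn (d + y - x) 2, minn (minn d 3) 2 = minn d 2,
      (x <= minn d 3 + y)%N & (minn d 3 < 4)%N].
Proof.
move=> h; case: (leqP d 3) => h3.
  by split => //; rewrite ltnS.
have e2 : minn d 2 = 2%N by apply/minn_idPr; nlia.
have e3 : minn (d + y - x) 2 = 2%N by apply/minn_idPr; move: h h3; case: x; case: y => /= h h3; nlia.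
have e4 : minn (3 + y - x) 2 = 2%N by apply/minn_idPr; move: (x) (y) => [] [].
rewrite e2 e3 e4; split => //; by move: (x) (y) => [] [].
Qed.

Lemma rearr (a b c d e : int) : a + b + c + (d + e) = a + d + c + b + e.
Proof.
rewrite !addrA; congr (_ + _).
rewrite -!addrA; congr (_ + _).
by rewrite (addrC c d) addrCA (addrC b c).
Qed.

Lemma rearr2 (a p0 p1 s0 e : int) : a + (p0 + p1) + s0 + e = a + p0 + s0 + p1 + e.
Proof. by rewrite addrA (addrAC _ p1 s0). Qed.

Lemma rearr3 (a b c d e f g : int) :
  a + (b + c) + (d + e) + (f + g) = a + b + d + f + e + c + g.
Proof.
rewrite !addrA; congr (_ + _).
by rewrite (addrAC (a+b) c d) (addrAC (a+b+d) c e) (addrAC (a+b+d+e) c f) (addrAC (a+b+d) e f).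
Qed.

Lemma scan m k q q' (x : nat -> bool) : x 0 = false -> (forall i, (m < i)%N -> x i = false) ->
  (1 <= k)%N -> forall n, (1 <= n)%N ->
  (ftab (x n) (yv (Sx x m) n) (cmp n k) (cmp n q) (cmp n q') (minn (dn x (Sx x m) n) 2) != LOW) &&
  (Rr x (Sx x m) k q q' n + (if (n <= k)%N then (dn x (Sx x m) n)%:Z else 0) <=
   ftab (x n) (yv (Sx x m) n) (cmp n k) (cmp n q) (cmp n q') (minn (dn x (Sx x m) n) 2)).
Proof.
move=> x0 xm k1; set c := Sx x m; elim => [|n IH] h1; first by rewrite ltnn in h1.
case: n IH h1 => [|n] IH _.
  have ck0 : cmp 0 k = 0%N by rewrite /cmp k1.
  have xy : (x 1%N <= yv c 1)%N.
    by have := Sx_le_Sy 1 xm; rewrite /c SxS SyS Sx0 Sy0 !add0n.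
  have d1 : dn x c 1 = (yv c 1 - x 1%N)%N by rewrite /dn SxS SyS Sx0 Sy0 !add0n.
  rewrite k1 d1 -subzn //.
  have := @baseP (x 1%N) (yv c 1) (cmp 1 k) (cmp 0 q) (cmp 0 q') (cmp 1 q) (cmp 1 q')
    (cmp_lt3 _ _) (cmp_lt3 _ _) (cmp_lt3 _ _) (cmp_lt3 _ _) (cmp_lt3 _ _).
  rewrite -{1}ck0 !next3_cmp => /(_ isT isT isT xy) /= /andP [-> H] /=.
  apply: le_trans H.
  have yv0 : yv c 0 = false by [].
  rewrite /Rr (big_nat_recr 1) //= !big_nat1 /ptR /stR x0 ck0 yv0 /e_of.
  by rewrite rearr2.
move: IH => /(_ isT) /= /andP [vNL IH].
set N := n.+1 in vNL IH *.
set d := dn x c N in vNL IH *.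
have rec : (dn x c N.+1 + x N.+1 = d + yv c N.+1)%N by apply: dn_rec.
have xd : (x N.+1 <= d + yv c N.+1)%N by rewrite -rec leq_addl.
have [E1 E2 E3 E4] := minn_aux xd.
have yy : yv c N.+1 ==> yv c N by rewrite /yv /N; apply/implyP => /andP [_ h] /=; exact: ltnW.
have := @chkP (x N) (yv c N) _ _ _ (x N.+1) (yv c N.+1) _ _ _ _ (cmp_lt3 N k) (cmp_lt3 N q) (cmp_lt3 N q') (cmp_lt3 N.+1 k) (cmp_lt3 N.+1 q)
   (cmp_lt3 N.+1 q') E4 (next3_cmp N k) (next3_cmp N q) (next3_cmp N q') yy E3.
have d2eq : (d + yv c N.+1 - x N.+1)%N = dn x c N.+1 by rewrite -rec addnK.
rewrite /chk /= E1 E2 (negbTE vNL) d2eq /= => /andP [-> H] /=.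
have d2E : (dn x c N.+1)%:Z = d%:Z + e_of (x N.+1) (yv c N.+1).
  by rewrite /e_of addrA -PoszD -rec PoszD addrK.
apply: le_trans H.
have key : (if (N.+1 <= k)%N then (dn x c N.+1)%:Z else 0) <=
    (if (N <= k)%N then d%:Z else 0) + adjA (x N.+1) (yv c N.+1) (cmp N k) (cmp N.+1 k) (minn d 2).
  rewrite /adjA !cmp_ne2.
  case: (leqP N.+1 k) => h1.
    by rewrite (ltnW h1) d2E.
  case: (leqP N k) => h2; last by rewrite addr0.
  by rewrite subr_ge0 lez_nat geq_minl.
rewrite /Rr (big_nat_recr N 0 (stR x c k q q')) // (big_nat_recr N.+1 0) //=.
set A := (2 * _)%:Z; set SP := \sum_(0 <= p < N.+1) _; set SS := \sum_(0 <= p < N) _.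
set adj := adjA _ _ _ _ _.
set pt := ptR _ _ _ _ _ _; set st := stR _ _ _ _ _ _.
apply: (@le_trans _ _ (A + (SP + pt) + (SS + st) + ((if (N <= k)%N then d%:Z else 0) + adj))).
  by rewrite lerD2l.
rewrite rearr3.
apply: lerD; last exact: lexx.
apply: lerD; last exact: lexx.
apply: lerD; last exact: lexx.
exact: IH.
Qed.


Lemma col_final m k q q' (x : nat -> bool) : x 0 = false ->
  (forall i, (m < i)%N -> x i = false) -> (1 <= k <= m)%N -> (q <= m.+1)%N -> (q' <= m.+1)%N ->
  Rr x (Sx x m) k q q' m.+2 <= 0.
Proof.
move=> x0 xm /andP [k1 km] qm q'm.
have /andP [_ H] := scan q q' x0 xm k1 (isT : (1 <= m.+2)%N).
have cm := Sx_le_n x m.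
have e1 : x m.+2 = false by apply: xm; rewrite ltnS leqnSn.
have e2 : yv (Sx x m) m.+2 = false.
  by rewrite /yv /=; apply/negbTE; rewrite -ltnNge ltnS (leq_trans cm) // leqnSn.
have e3 : forall a, (a <= m.+1)%N -> cmp m.+2 a = 2%N.
  by move=> a ha; apply/eqP; rewrite cmp_eq2 ltnS.
have e4 : dn x (Sx x m) m.+2 = 0%N.
  rewrite /dn Sy_min (Sx_stable xm) ?leqW //.
  by rewrite (minn_idPr _) ?subnn // (leq_trans cm) // leqW.
move: H; rewrite e1 e2 !e3 ?(leqW km) // e4 /=.
have -> : (m.+2 <= k)%N = false by apply/negbTE; rewrite -ltnNge ltnS (leq_trans km) // leqW.
rewrite addr0 => H; apply: (le_trans H); exact: final_ok.
Qed.

Definition ev (x : nat -> bool) (c i : nat) : int := e_of (x i) (yv c i).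
Definition gv (x : nat -> bool) (c k i : nat) : int := if (i <= k)%N then ev x c i else 0.
Definition hv (x : nat -> bool) (c k i : nat) : int := if (k < i)%N then ev x c i else 0.
Definition UV (f : nat -> int) (a b : nat) : int := \sum_(a <= p < b) pp (f p.+1 - f p).
Definition TVc (x : nat -> bool) (N : nat) : int := \sum_(0 <= p < N) ((x p.+1 != x p) : nat)%:Z.
Definition bracket (x : nat -> bool) (c k q q' : nat) : int :=
  (2 * (x 1%N : nat))%:Z + UV (gv x c k) 0 q + (gv x c k q - (if q == k then gv x c k k else 0))
  + UV (hv x c k) 0 q' + hv x c k q' - \sum_(1 <= i < k.+1) ev x c i.

Lemma ptR_eq x c k q q' p : ptR x c k q q' p =
  (if p == q then gv x c k q - (if q == k then gv x c k k else 0) else 0)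
  + (if p == q' then hv x c k q' else 0) - (if (p <= k)%N then ev x c p else 0).
Proof.
rewrite /ptR /ptA /g_of /h_of !cmp_eq1 !cmp_ne2 !cmp_eq2 /gv /hv /ev.
case: (eqVneq p q) => [<-|_]; case: (eqVneq p q') => [<-|_] //;
  case: (eqVneq p k) => [->|_] //; by rewrite ?leqnn.
Qed.

Lemma stR_eq x c k q q' p : stR x c k q q' p =
  (if (p < q)%N then pp (gv x c k p.+1 - gv x c k p) else 0)
  + (if (p < q')%N then pp (hv x c k p.+1 - hv x c k p) else 0)
  - ((x p.+1 != x p) : nat)%:Z.
Proof.
by rewrite /stR /stA !cmp_eq0 /g_of /h_of !cmp_ne2 !cmp_eq2 /gv /hv /ev.
Qed.

Lemma sum_if_eq (A : nat -> int) N q : (q < N)%N ->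
  \sum_(0 <= p < N) (if p == q then A p else 0) = A q.
Proof.
elim: N => [//|N IH] h; rewrite big_nat_recr //=.
case: (ltngtP q N) => hq.
- by rewrite IH // addr0.
- by move: h; rewrite ltnS leqNgt hq.
- rewrite -hq big_nat_cond big1 ?add0r // => p /andP [/andP [_ hp] _].
  by rewrite ltn_eqF.
Qed.

Lemma sum_if_lt (A : nat -> int) N q : (q <= N)%N ->
  \sum_(0 <= p < N) (if (p < q)%N then A p else 0) = \sum_(0 <= p < q) A p.
Proof.
move=> h; rewrite (@big_cat_nat _ _ _ q) //=.
rewrite -[RHS]addr0; congr (_ + _).
  by apply: eq_big_nat => p /andP [_ hp]; rewrite hp.
rewrite big_nat_cond big1 // => p /andP [/andP [hp _] _].
by rewrite ltnNge hp.
Qed.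

Lemma rearr4 (a g h e u v t : int) :
  a + (g + h - e) + (u + v - t) = a + u + g + v + h - e - t.
Proof.
rewrite !addrA; congr (_ + _).
by rewrite (addrAC (a+g+h) (-e) u) (addrAC (a+g+h+u) (-e) v) (addrAC (a+g) h u)
  (addrAC (a+g+u) h v) (addrAC a g u).
Qed.

Lemma Rr_eq x c k q q' N : x 0 = false -> (q <= N)%N -> (q' <= N)%N -> (k <= N)%N ->
  Rr x c k q q' N = bracket x c k q q' - TVc x N.
Proof.
move=> x0 hq hq' hk.
rewrite /Rr (eq_bigr _ (fun p _ => ptR_eq x c k q q' p)) (eq_bigr _ (fun p _ => stR_eq x c k q q' p)).
rewrite !sumrB !big_split /= !sum_if_eq ?ltnS // !sum_if_lt //.
under eq_bigr => p _ do rewrite -ltnS.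
rewrite sum_if_lt ?ltnS // (big_ltn (n:=k.+1)) // {1}/ev x0 /= /e_of /= subrr add0r.
by rewrite rearr4.
Qed.

Lemma col_bound m k q q' (x : nat -> bool) : x 0 = false ->
  (forall i, (m < i)%N -> x i = false) -> (1 <= k <= m)%N -> (q <= m.+1)%N -> (q' <= m.+1)%N ->
  bracket x (Sx x m) k q q' <= TVc x m.+2.
Proof.
move=> x0 xm km qm q'm; have := col_final x0 xm km qm q'm.
move: km => /andP [_ km].
rewrite Rr_eq // ?(leqW qm) ?(leqW q'm) ?(leqW (leqW km)) //.
by rewrite subr_le0.
Qed.

Lemma pp_ge0 z : 0 <= pp z. Proof. by rewrite /pp; case: ifP => // /negbT; rewrite -ltNge. Qed.
Lemma pp_ge z : z <= pp z.
Proof. by rewrite /pp; case: ifP => // /negbT; rewrite -ltNge => /ltW. Qed.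
Lemma pp_add a b : pp (a + b) <= pp a + pp b.
Proof.
rewrite {1}/pp; case: ifP => _; last by rewrite addr_ge0 ?pp_ge0.
by apply: lerD; apply: pp_ge.
Qed.
Lemma pp_sum (I : Type) (r : seq I) (F : I -> int) : pp (\sum_(i <- r) F i) <= \sum_(i <- r) pp (F i).
Proof.
apply: (big_ind2 (fun u v => pp u <= v)).
- by [].
- by move=> a1 b1 a2 b2 h1 h2; apply: le_trans (pp_add _ _) _; apply: lerD.
- by move=> i _; apply: lexx.
Qed.

Lemma UV_ge0 f a b : 0 <= UV f a b.
Proof. by apply: sumr_ge0 => p _; apply: pp_ge0. Qed.
Lemma UV_split f a b c : (a <= b)%N -> (b <= c)%N -> UV f a c = UV f a b + UV f b c.
Proof. by move=> h1 h2; rewrite /UV (@big_cat_nat _ _ _ b). Qed.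
Lemma tele_le f a b : (a <= b)%N -> f b - f a <= UV f a b.
Proof.
move=> h; rewrite -telescope_sumr //; apply: ler_sum => p _; exact: pp_ge.
Qed.
Lemma UV_nil f a : UV f a a = 0. Proof. by rewrite /UV big_geq. Qed.

Lemma altsum1 (f : nat -> int) a : altsum f [:: a] = 2%:R * f a.
Proof. by rewrite /altsum /= big_ord0 add0r. Qed.

Lemma altsum2 (f : nat -> int) a b c s :
  altsum f [:: a, b, c & s] = f a - f b + altsum f (c :: s).
Proof.
rewrite /altsum /= !big_ord_recl /= expr0 mul1r expr1 mulN1r.
rewrite !addrA; congr (_ + _); congr (_ + _).
apply: eq_bigr => i _; rewrite /bump /= !exprS !mulN1r opprK.
by [].
Qed.

Lemma last_ge a s : sorted ltn (a :: s) -> (a <= last a s)%N.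
Proof.
elim: s a => [//|b s IH] a /= /andP [hab hs].
exact: (leq_trans (ltnW hab) (IH b hs)).
Qed.

Lemma chain_gen (f : nat -> int) n : forall s a, size s = n.*2 -> sorted ltn (a :: s) ->
  altsum f (a :: s) <= f a + UV f a (last a s) + f (last a s).
Proof.
elim: n => [|n IH] [|b [|c s]] a //= hs.
- by rewrite altsum1 UV_nil addr0 mulr2n mulrDl mul1r.
- case: hs => hs; move=> /andP [hab /andP [hbc hp]].
  rewrite altsum2.
  have := IH s c hs; rewrite /= hp => /(_ isT) H.
  have hcl : (c <= last c s)%N by apply: last_ge; exact: hp.
  rewrite (UV_split f (ltnW hab) (leq_trans (ltnW hbc) hcl)) (UV_split f (ltnW hbc) hcl).
  have h1 := tele_le f (ltnW hbc).
  have h2 := UV_ge0 f a b.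
  apply: (le_trans (lerD (lexx (f a - f b)) H)).
  rewrite !addrA -(addrA (f a)) (addrAC (f a) _ (f c)) -!addrA lerD2l !addrA.
  rewrite lerD2r lerD2r.
  apply: (le_trans _ (lerD (lexx _) h1)); rewrite addrC.
  by rewrite -[X in X <= _]add0r lerD2r.
Qed.

Lemma chain (f : nat -> int) s : f 0%N = 0 -> sorted ltn s -> odd (size s) ->
  altsum f s <= UV f 0 (last 0%N s) + f (last 0%N s).
Proof.
case: s => [//|a s] f0 hs /= hodd.
have hsz : size s = (size s)./2.*2 by rewrite even_halfK.
apply: (le_trans (chain_gen f hsz hs)).
rewrite lerD2r (UV_split f (leq0n a) (last_ge hs)) lerD2r.
by have := tele_le f (leq0n a); rewrite f0 subr0.
Qed.

Lemma eq_altsum (f g : nat -> int) s : s != [::] -> {in s, f =1 g} -> altsum f s = altsum g s.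
Proof.
case: s => [//|a s] _ h; rewrite /altsum; congr (_ + _).
  apply: eq_bigr => i _; rewrite h //; apply: mem_nth.
  by apply: (leq_trans (ltn_ord i)); rewrite leq_pred.
by rewrite h //= mem_last.
Qed.

Lemma UV_sum (g : nat -> nat -> int) a b n :
  UV (fun p => \sum_(1 <= j < n.+1) g j p) a b <= \sum_(1 <= j < n.+1) UV (g j) a b.
Proof.
rewrite /UV exchange_big_nat.
apply: ler_sum => p _; rewrite -sumrB; exact: pp_sum.
Qed.

Lemma colsum_le m F j : (colsum m F j <= m)%N.
Proof. exact: (Sx_le_n (fun i => F i j) m). Qed.

Lemma grid0 m n F j : in_grid m n F -> F 0 j = false.
Proof. by move=> hg; apply/negbTE/negP => /hg. Qed.
Lemma gridm m n F i j : in_grid m n F -> (m < i)%N -> F i j = false.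
Proof.
move=> hg hi; apply/negbTE/negP => /hg /andP [/andP [_ h] _].
by move: hi; rewrite ltnNge h.
Qed.

Lemma dseq_sum m n F : in_grid m n F -> forall i,
  dseq m n F i = \sum_(1 <= j < n.+1) ev (fun i => F i j) (colsum m F j) i.
Proof.
move=> hg i; rewrite /dseq /bseq /rowsum.
case: ifP => hi.
  rewrite !(big_morph Posz PoszD (erefl (Posz 0))) -sumrB.
  apply: eq_bigr => j _; rewrite /ev /e_of /yv.
  by move: hi => /andP [-> _].
rewrite big1 // => j _.
have Fij : F i j = false.
  by apply/negbTE/negP => /hg /andP [h _]; rewrite h in hi.
have yij : (1 <= i <= colsum m F j)%N = false.
  apply/negbTE/negP => /andP [a b]; move: hi.
  by rewrite a (leq_trans b (colsum_le m F j)).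
by rewrite /ev /e_of /yv Fij yij.
Qed.

Lemma col_tv m (x : nat -> bool) : x 0 = false -> (forall i, (m < i)%N -> x i = false) ->
  (\sum_(1 <= i < m.+1) (x i * ((~~ x i.-1 : nat) + (~~ x i.+1 : nat))))%N
  = (\sum_(0 <= p < m.+2) ((x p.+1 != x p) : nat))%N.
Proof.
move=> x0 xm.
rewrite [RHS](eq_bigr (fun p => (x p.+1 && ~~ x p) + (x p && ~~ x p.+1))%N); last first.
  by move=> p _; case: (x p); case: (x p.+1).
rewrite [LHS](eq_bigr (fun i => (x i && ~~ x i.-1) + (x i && ~~ x i.+1))%N); last first.
  by move=> i _; case: (x i); case: (x i.-1); case: (x i.+1).
rewrite !big_split /=; congr (_ + _)%N.
  have -> : (\sum_(0 <= p < m.+2) (x p.+1 && ~~ x p : nat))%N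
          = (\sum_(1 <= i < m.+3) (x i && ~~ x i.-1 : nat))%N by rewrite big_add1.
  rewrite (big_nat_recr m.+2 1) // (big_nat_recr m.+1 1) //= (xm m.+1) // (xm m.+2) //.
  by rewrite /= !addn0.
rewrite (big_ltn (m:=0) (n:=m.+2)) // x0 add0n (big_nat_recr m.+1 1) //= (xm m.+1) //.
by rewrite /= addn0.
Qed.

Lemma hb_sum m n F : in_grid m n F ->
  (hboundary m n F)%:Z = \sum_(1 <= j < n.+1) TVc (fun i => F i j) m.+2.
Proof.
move=> hg; rewrite /hboundary exchange_big_nat /=.
rewrite (big_morph Posz PoszD (erefl (Posz 0))).
apply: eq_bigr => j _.
rewrite /TVc -(big_morph Posz PoszD (erefl (Posz 0))).
congr Posz.
apply: (col_tv (x := fun i => F i j)).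
  exact: grid0 hg.
by move=> i hi; apply: gridm hg hi.
Qed.

Local Close Scope ring_scope.
Unset Implicit Arguments.

Theorem corollary5p3 (m n : nat) (F : nat -> nat -> bool) (k : nat) :
  1 <= m -> 1 <= n -> in_grid m n F ->
  1 <= k <= m ->
  (dseq m n F k < 0)%R -> (0 <= dseq m n F k.+1)%R ->
  forall (t s : nat) (I J : seq nat),
    size I = (2 * t).+1 -> sorted ltn I ->
    all (fun x => (x <= k) || (x == m.+1)) I ->
    size J = (2 * s).+1 -> sorted ltn J ->
    all (fun x => (x == 0) || (k < x <= m.+1)) J ->
    ((2 * rowsum n F 1)%:Z + altsum (dseq m n F) I + altsum (dseq m n F) J
       - \sum_(1 <= i < k.+1) dseq m n F i <= (hboundary m n F)%:Z)%R.
Proof.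
Local Open Scope ring_scope.
move=> m1 n1 hg /andP [k1 km] dk _ t s I J sI hI aI sJ hJ aJ.
set d := dseq m n F.
have dS := dseq_sum hg.
have d0 : d 0%N = 0 by [].
have dm : d m.+1 = 0 by rewrite /d /dseq ltnn andbF.
set Gd := fun i => if (i <= k)%N then d i else 0.
set Hd := fun i => if (k < i)%N then d i else 0.
set qI := last 0%N I; set qJ := last 0%N J.
have Ine : I != [::] by rewrite -size_eq0 sI.
have Jne : J != [::] by rewrite -size_eq0 sJ.
have oI : odd (size I) by rewrite sI /= oddM.
have oJ : odd (size J) by rewrite sJ /= oddM.
have qIin : qI \in I by rewrite /qI; case: (I) Ine => // a l _; rewrite /= mem_last.
have qJin : qJ \in J by rewrite /qJ; case: (J) Jne => // a l _; rewrite /= mem_last.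
have qIm : (qI <= m.+1)%N.
  move/allP: aI => /(_ qI qIin) /orP [h|/eqP ->] //.
  by rewrite (leq_trans h) // leqW.
have qJm : (qJ <= m.+1)%N.
  move/allP: aJ => /(_ qJ qJin) /orP [/eqP ->|/andP [_ h]] //.
have altI : altsum d I = altsum Gd I.
  apply: eq_altsum => // y /(allP aI) /orP [h|/eqP ->]; rewrite /Gd.
    by rewrite h.
  by rewrite dm ?if_same.
have altJ : altsum d J = altsum Hd J.
  apply: eq_altsum => // y /(allP aJ) /orP [/eqP ->|/andP [h _]]; rewrite /Hd.
    by rewrite d0 ?if_same.
  by rewrite h.
have chI : altsum Gd I <= UV Gd 0 qI + Gd qI.
  apply: chain => //; by rewrite /Gd d0; case: ifP.
have chJ : altsum Hd J <= UV Hd 0 qJ + Hd qJ.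
  by apply: chain => //; rewrite /Hd d0; case: ifP.
have GdS : forall i, Gd i = \sum_(1 <= j < n.+1) gv (fun i => F i j) (colsum m F j) k i.
  move=> i; rewrite /Gd /gv; case: ifP => _; first exact: dS.
  by rewrite big1.
have HdS : forall i, Hd i = \sum_(1 <= j < n.+1) hv (fun i => F i j) (colsum m F j) k i.
  move=> i; rewrite /Hd /hv; case: ifP => _; first exact: dS.
  by rewrite big1.
have KG : Gd qI <= Gd qI - (if qI == k then Gd k else 0).
  case: (eqVneq qI k) => [->|_]; last by rewrite subr0.
  by rewrite subrr /Gd leqnn ltW.
apply: (@le_trans _ _ (\sum_(1 <= j < n.+1) bracket (fun i => F i j) (colsum m F j) k qI qJ)).
  rewrite /bracket sumrB !big_split /=.
  have hA : (2 * rowsum n F 1)%:Z = \sum_(1 <= j < n.+1) (2 * F 1%N j)%:Z.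
    by rewrite /rowsum big_distrr /= (big_morph Posz PoszD (erefl (Posz 0))).
  have hE : \sum_(1 <= i < k.+1) d i =
      \sum_(1 <= j < n.+1) \sum_(1 <= i < k.+1) ev (fun i => F i j) (colsum m F j) i.
    by rewrite (eq_bigr _ (fun i _ => dS i)) exchange_big_nat.
  have hI' : altsum d I <= \sum_(1 <= j < n.+1) UV (gv (fun i => F i j) (colsum m F j) k) 0 qI
      + (\sum_(1 <= j < n.+1) gv (fun i => F i j) (colsum m F j) k qI
         + \sum_(1 <= j < n.+1) - (if qI == k then gv (fun i => F i j) (colsum m F j) k k else 0)).
    rewrite altI sumrN -GdS.
    have -> : \sum_(1 <= j < n.+1) (if qI == k then gv (fun i => F i j) (colsum m F j) k k else 0)
        = (if qI == k then Gd k else 0).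
      by case: (qI == k); rewrite ?GdS // big1.
    apply: (le_trans chI); apply: lerD; last exact: KG.
    have -> : UV Gd 0 qI = UV (fun p => \sum_(1 <= j < n.+1) gv (fun i => F i j) (colsum m F j) k p) 0 qI.
      by apply: eq_bigr => p _; rewrite !GdS.
    exact: UV_sum.
  have hJ' : altsum d J <= \sum_(1 <= j < n.+1) UV (hv (fun i => F i j) (colsum m F j) k) 0 qJ
      + \sum_(1 <= j < n.+1) hv (fun i => F i j) (colsum m F j) k qJ.
    rewrite altJ -HdS.
    apply: (le_trans chJ); apply: lerD; last exact: lexx.
    have -> : UV Hd 0 qJ = UV (fun p => \sum_(1 <= j < n.+1) hv (fun i => F i j) (colsum m F j) k p) 0 qJ.
      by apply: eq_bigr => p _; rewrite !HdS.
    exact: UV_sum.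
  move: hI' hJ'; set alI := altsum d I; set alJ := altsum d J; clearbody alI alJ; move=> hI' hJ'.
  rewrite hA hE -!addrA lerD2l !addrA lerD2r.
  apply: (le_trans (lerD hI' hJ')).
  by rewrite !addrA.
apply: (@le_trans _ _ (\sum_(1 <= j < n.+1) TVc (fun i => F i j) m.+2)).
  apply: ler_sum => j _; apply: col_bound => //.
  - exact: grid0 hg.
  - by move=> i hi; apply: gridm hg hi.
  - by rewrite k1 km.
by rewrite hb_sum.
Qed.
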